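(* Let $p$ be a directed lattice path on the square grid with at least one step, with first step $\mathbf a$ and last step $\mathbf b$, and set $x^{\circlearrowright}(p)=(x_{ur},x_{rd},x_{dl},x_{lu})$ and $x^{\circlearrowleft}(p)=(x_{ru},x_{dr},x_{ld},x_{ul})$, where $x_{st}$ is the number of turns of type $st$ in $p$. (1) There is an integer $k$ such that $v(p):=x^{\circlearrowright}(p)-x^{\circlearrowleft}(p)-k(1,1,1,1)\in\{0,1\}^4$. (2) Writing $v(p)=(v_{ur},v_{rd},v_{dl},v_{lu})$, let $\mathbf a=s_0,s_1,\dots,s_m=\mathbf b$ be the shortest sequence ($0\le m\le 3$) in which each $s_{j+1}$ is the clockwise successor of $s_j$ in the cyclic order $u\to r\to d\to l\to u$. Then $v_t=1$ if and only if $t=s_js_{j+1}$ for some $0\le j<m$. (3) If $p$ is closed and self-avoiding, with turns counted cyclically, then $(x^{\circlearrowright}(p)-x^{\circlearrowleft}(p))\cdot(1,1,1,1)^t$ equals $4$ if $p$ is oriented clockwise and $-4$ if it is oriented counterclockwise.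
   Context: A directed lattice path is a finite sequence of steps, each in $\{u=(0,1),\ r=(1,0),\ d=(0,-1),\ l=(-1,0)\}$, such that no two consecutive steps are opposite. A turn of type $st$ (with $s\ne t$) is an occurrence of a step $s$ immediately followed by a step $t$. A path is closed if it ends at its starting point; for closed paths the last step is considered to be followed by the first step (turns counted cyclically), and it is self-avoiding if it visits no lattice point twice except that start equals end. Its orientation is clockwise or counterclockwise as a simple closed polygon. *)

(* Defs.v *)
From HB Require Import structures.
From mathcomp Require Import all_boot all_order all_algebra.
Set Implicit Arguments. Unset Strict Implicit. Unset Printing Implicit Defensive.
Import Order.TTheory GRing.Theory Num.Theory.
Local Open Scope ring_scope.

Inductive step := U | R | D | L.

Definition step_eqb (a b : step) : bool :=
  match a, b with
  | U, U | R, R | D, D | L, L => true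
  | _, _ => false
  end.

Lemma step_eqP : Equality.axiom step_eqb.
Proof. by case; case; constructor. Qed.

HB.instance Definition _ := hasDecEq.Build step step_eqP.

Definition dx (s : step) : int :=
  match s with U => 0 | R => 1 | D => 0 | L => -1 end.
Definition dy (s : step) : int :=
  match s with U => 1 | R => 0 | D => -1 | L => 0 end.

Definition opp (s : step) : step :=
  match s with U => D | R => L | D => U | L => R end.

Definition cw_next (s : step) : step :=
  match s with U => R | R => D | D => L | L => U end.

Definition directed (p : seq step) : bool :=
  all (fun st => st.2 != opp st.1) (zip p (behead p)).

Definition turns (p : seq step) (s t : step) : nat :=
  count (fun st => (st.1 == s) && (st.2 == t)) (zip p (behead p)).

(* number of turns of type st counted cyclically (last step followed by first) *)
Definition cturns (p : seq step) (s t : step) : nat :=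
  count (fun st => (st.1 == s) && (st.2 == t)) (zip p (rot 1 p)).

(* component of x^cw(p) - x^ccw(p) indexed by s, i.e. at the turn type
   s (cw_next s): the components ur,rd,dl,lu of x^cw correspond to
   ru,dr,ld,ul of x^ccw. *)
Definition xdiff (p : seq step) (s : step) : int :=
  (turns p s (cw_next s))%:Z - (turns p (cw_next s) s)%:Z.

Definition cxdiff (p : seq step) (s : step) : int :=
  (cturns p s (cw_next s))%:Z - (cturns p (cw_next s) s)%:Z.

Definition posx (p : seq step) (i : nat) : int := \sum_(s <- take i p) dx s.
Definition posy (p : seq step) (i : nat) : int := \sum_(s <- take i p) dy s.

Definition closed (p : seq step) : bool :=
  (posx p (size p) == 0) && (posy p (size p) == 0).

Definition self_avoiding_closed (p : seq step) : Prop :=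
  closed p /\
  forall i j : nat, (i < j)%N -> (j < size p)%N ->
    (posx p i, posy p i) <> (posx p j, posy p j).

(* twice the signed (shoelace) area of the polygon traced by p *)
Definition area2 (p : seq step) : int :=
  \sum_(i < size p) (posx p i * posy p i.+1 - posx p i.+1 * posy p i).

(* orientation of a simple closed polygon: counterclockwise iff positive
   signed area, clockwise iff negative signed area *)
Definition clockwise (p : seq step) : bool := area2 p < 0.
Definition counterclockwise (p : seq step) : bool := 0 < area2 p.

(* Main.v *)
Require Import Defs.
From HB Require Import structures.
From mathcomp Require Import all_boot all_order all_algebra.
From mathcomp Require Import zify ring lra.
Import Order.TTheory GRing.Theory Num.Theory.
Local Open Scope ring_scope.
Definition b2z (b : bool) : int := if b then 1 else 0.
Definition cc (ax ay bx by' : int) : int := b2z (0 < ax) * (b2z (0 <= by') - b2z (0 <= ay)).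

Ltac bzsolve := rewrite /cc /b2z; repeat case: ifP => ?; lia.
Ltac bz2 := rewrite /cc /b2z; repeat match goal with |- context [if ?b then _ else _] => let E := fresh in case E: b end; lia.

Definition unitv (dx dy : int) : Prop :=
  (dx = 0 /\ (dy = 1 \/ dy = -1)) \/ (dy = 0 /\ (dx = 1 \/ dx = -1)).
Lemma square (ax ay sx sy tx ty : int) :
  unitv sx sy -> unitv tx ty ->
  ~ (ax = 0 /\ ay = 0) -> ~ (ax + tx = 0 /\ ay + ty = 0) ->
  ~ (ax - sx = 0 /\ ay - sy = 0) -> ~ (ax + tx - sx = 0 /\ ay + ty - sy = 0) ->
  cc ax ay (ax + tx) (ay + ty) + cc (ax + tx) (ay + ty) (ax + tx - sx) (ay + ty - sy)
  = cc ax ay (ax - sx) (ay - sy) + cc (ax - sx) (ay - sy) (ax - sx + tx) (ay - sy + ty).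
Proof.
move=> [[-> [->|->]]|[-> [->|->]]] [[-> [->|->]]|[-> [->|->]]] H1 H2 H3 H4; rewrite ?addr0 ?subr0 ?opprK; bz2.
Qed.

Definition Eh (x y : nat -> int) i j := cc (x j - x i) (y j - y i) (x j.+1 - x i) (y j.+1 - y i).
Definition Ev (x y : nat -> int) i j := cc (x j - x i) (y j - y i) (x j - x i.+1) (y j - y i.+1).
Definition Tri x y i := Eh x y i i.+1 + Ev x y i i.+2.

Lemma sq_xy (x y : nat -> int) i j :
  unitv (x i.+1 - x i) (y i.+1 - y i) -> unitv (x j.+1 - x j) (y j.+1 - y j) ->
  ~ (x j - x i = 0 /\ y j - y i = 0) -> ~ (x j.+1 - x i = 0 /\ y j.+1 - y i = 0) ->
  ~ (x j - x i.+1 = 0 /\ y j - y i.+1 = 0) -> ~ (x j.+1 - x i.+1 = 0 /\ y j.+1 - y i.+1 = 0) ->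
  Eh x y i j = Ev x y i j + Eh x y i.+1 j - Ev x y i j.+1.
Proof.
move=> Hs Ht H1 H2 H3 H4.
have := square _ _ _ _ _ _ Hs Ht H1.
have e1 : forall a b c : int, a - b + (c - a) = c - b by move=> a b c; ring.
have e2 : forall a b c : int, a - b - (c - b) = a - c by move=> a b c; ring.
have e3 : forall a b c d : int, a - b + (c - a) - (d - b) = c - d by move=> *; ring.
have e4 : forall a b c d : int, a - b - (d - b) + (c - a) = c - d by move=> *; ring.
rewrite !e1 !e2 !e1 => /(_ H2 H3 H4).
rewrite /Eh /Ev => E; lia.
Qed.


Lemma hopf (x y : nat -> int) (n : nat) :
  (forall i, unitv (x i.+1 - x i) (y i.+1 - y i)) ->
  (forall i j, (i < j)%N -> (j <= n)%N -> ~ (i = 0%N /\ j = n) ->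
      ~ (x j - x i = 0 /\ y j - y i = 0)) ->
  (3 <= n)%N ->
  \sum_(0 <= i < n.-1) Tri x y i =
  \sum_(1 <= j < n.-1) Eh x y 0 j + \sum_(1 <= i < n.-1) Ev x y i n
  + (Ev x y 0 n.-1 + Eh x y 1 n.-1).
Proof.
move=> Hu Hnz Hn.
set R := fun i => \sum_(i.+1 <= j < n) Eh x y i j.
have sqij : forall i j, (i.+1 < j)%N -> (j.+1 <= n)%N -> ~ (i = 0%N /\ j.+1 = n) ->
    Eh x y i j = Ev x y i j + Eh x y i.+1 j - Ev x y i j.+1.
  move=> i j Hij Hjn Hc; apply: sq_xy; [apply: Hu|apply: Hu|apply: Hnz; lia..].
have rowstep : forall i, (1 <= i)%N -> (i.+2 <= n)%N ->
    R i = Tri x y i + R i.+1 - Ev x y i n.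
  move=> i Hi Hin; rewrite /R big_ltn; last by lia.
  rewrite (@eq_big_nat _ _ _ i.+2 n _ (fun j => Eh x y i.+1 j - (Ev x y i j.+1 - Ev x y i j))); last first.
    move=> j /andP [Hj1 Hj2]; rewrite (sqij i j); [ring|lia..].
  rewrite sumrB telescope_sumr; last by lia.
  rewrite /Tri. set S := \sum_(_ <= _ < _) _. clearbody S. lia.
have unroll : forall d m, (1 <= m)%N -> (m + d = n.-1)%N ->
    R m = \sum_(m <= i < n.-1) (Tri x y i - Ev x y i n).
  elim=> [|d IH] m Hm Hmd.
    rewrite addn0 in Hmd; subst m.
    rewrite big_geq // /R big_geq //; lia.
  rewrite rowstep; [|lia|lia].
  rewrite (IH m.+1) ?(big_ltn (m := m)); [|lia|lia|lia].
  set S := \sum_(_ <= _ < _) _. clearbody S. lia.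
have R1 := unroll (n.-1 - 1)%N 1%N (leqnn 1) ltac:(lia).
have S0 : \sum_(1 <= j < n.-1) Eh x y 0 j =
    Tri x y 0 + R 1%N - Eh x y 1 n.-1 - Ev x y 0 n.-1.
  rewrite big_ltn; last by lia.
  rewrite (@eq_big_nat _ _ _ 2 n.-1 _ (fun j => Eh x y 1 j - (Ev x y 0 j.+1 - Ev x y 0 j))); last first.
    move=> j /andP [Hj1 Hj2]; rewrite (sqij 0%N j); [ring|lia..].
  rewrite sumrB telescope_sumr; last by lia.
  rewrite /R (@big_cat_nat _ _ _ n.-1 2 n) /=; [|lia|lia].
  have -> : n = (n.-1).+1 by lia.
  rewrite big_nat1 /Tri; have -> : (n.-1.+1.-1 = n.-1)%N by lia.
  set S := \sum_(_ <= _ < _) _. clearbody S. lia.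
rewrite S0 R1 (big_ltn (m := 0%N)); last by lia.
rewrite sumrB.
set S1 := \sum_(1 <= _ < _) Tri x y _. set S2 := \sum_(1 <= _ < _) Ev x y _ _.
clearbody S1 S2. lia.
Qed.

Definition X p i := posx p (i %% size p).
Definition Y p i := posy p (i %% size p).
Definition st p i := nth U p (i %% size p).

Lemma posx_S p i : (i < size p)%N -> posx p i.+1 = posx p i + dx (nth U p i).
Proof. by move=> Hi; rewrite /posx (take_nth U) // big_rcons. Qed.
Lemma posy_S p i : (i < size p)%N -> posy p i.+1 = posy p i + dy (nth U p i).
Proof. by move=> Hi; rewrite /posy (take_nth U) // big_rcons. Qed.
Lemma posx0 p : posx p 0 = 0. Proof. by rewrite /posx take0 big_nil. Qed.
Lemma posy0 p : posy p 0 = 0. Proof. by rewrite /posy take0 big_nil. Qed.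

Lemma modS_split n i : (0 < n)%N ->
  (i.+1 %% n = if ((i %% n).+1 < n)%N then (i %% n).+1 else 0)%N.
Proof.
move=> Hn; rewrite -addn1 -modnDml addn1.
case: ifP => H; first by rewrite modn_small.
have -> : ((i %% n).+1 = n)%N.
  have := ltn_pmod i Hn; move/negbT: H; rewrite -leqNgt; lia.
by rewrite modnn.
Qed.

Lemma X_S p i : (0 < size p)%N -> Defs.closed p -> X p i.+1 = X p i + dx (st p i).
Proof.
move=> Hn /andP [/eqP Hx _]; rewrite /X /st modS_split //.
case: ifP => H; first by rewrite posx_S // ltn_pmod.
have E : ((i %% size p).+1 = size p)%N.
  have := ltn_pmod i Hn; move/negbT: H; rewrite -leqNgt; lia.
by rewrite posx0 -posx_S ?E ?Hx // -E.
Qed.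
Lemma Y_S p i : (0 < size p)%N -> Defs.closed p -> Y p i.+1 = Y p i + dy (st p i).
Proof.
move=> Hn /andP [_ /eqP Hx]; rewrite /Y /st modS_split //.
case: ifP => H; first by rewrite posy_S // ltn_pmod.
have E : ((i %% size p).+1 = size p)%N.
  have := ltn_pmod i Hn; move/negbT: H; rewrite -leqNgt; lia.
by rewrite posy0 -posy_S ?E ?Hx // -E.
Qed.

Lemma X_per p i : X p (i + size p) = X p i. Proof. by rewrite /X modnDr. Qed.
Lemma Y_per p i : Y p (i + size p) = Y p i. Proof. by rewrite /Y modnDr. Qed.
Lemma st_per p i : st p (i + size p) = st p i. Proof. by rewrite /st modnDr. Qed.

Lemma unit_step s : unitv (dx s) (dy s).
Proof. case: s; rewrite /unitv /=; lia. Qed.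

Lemma inj_XY p i j : self_avoiding_closed p -> (0 < size p)%N ->
  X p i = X p j -> Y p i = Y p j -> (i %% size p = j %% size p)%N.
Proof.
move=> [_ Hsa] Hn Hx Hy.
have Hi := ltn_pmod i Hn; have Hj := ltn_pmod j Hn.
case: (ltngtP (i %% size p) (j %% size p)) => // H.
- by exfalso; apply: (Hsa _ _ H Hj); move: Hx Hy; rewrite /X /Y => -> ->.
- by exfalso; apply: (Hsa _ _ H Hi); move: Hx Hy; rewrite /X /Y => -> ->.
Qed.

Lemma posx_size p : posx p (size p) = \sum_(s <- p) dx s.
Proof. by rewrite /posx take_size. Qed.
Lemma posy_size p : posy p (size p) = \sum_(s <- p) dy s.
Proof. by rewrite /posy take_size. Qed.

Lemma size3 p : directed p -> Defs.closed p -> p <> [::] -> (3 <= size p)%N.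
Proof.
move=> Hd /andP [/eqP Hx /eqP Hy] Hne.
rewrite posx_size in Hx; rewrite posy_size in Hy.
case: p Hd Hx Hy Hne => [|a [|b [|c q]]] //=.
- by rewrite !big_cons !big_nil; case: a.
- by rewrite /directed /= !big_cons !big_nil; case: a; case: b.
Qed.

Lemma nonopp p i : self_avoiding_closed p -> directed p -> p <> [::] ->
  st p i.+1 != Defs.opp (st p i).
Proof.
move=> Hsa Hd Hne.
have Hn3 := size3 p Hd (proj1 Hsa) Hne.
have Hn : (0 < size p)%N by lia.
have Hc := proj1 Hsa.
apply/negP => /eqP E.
have Hx : X p i.+2 = X p i by rewrite !X_S // E -addrA; case: (st p i) => /=; ring.
have Hy : Y p i.+2 = Y p i by rewrite !Y_S // E -addrA; case: (st p i) => /=; ring.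
have := inj_XY p _ _ Hsa Hn Hx Hy.
move/eqP; rewrite -(addn2 i) -{2}(addn0 i) eqn_modDl mod0n modn_small //.
Qed.



Definition Tc (s t : step) : int :=
  cc (dx s) (dy s) (dx s + dx t) (dy s + dy t) + cc (dx s + dx t) (dy s + dy t) (dx t) (dy t).
Definition Tpc (s t : step) : int :=
  cc (- dx s) (- dy s) (- dx s - dx t) (- dy s - dy t) + cc (- dx s - dx t) (- dy s - dy t) (- dx t) (- dy t).
Definition rotp p := \sum_(0 <= i < size p) Tc (st p i) (st p i.+1).
Definition gterm p (P Q : int -> bool) m :=
  b2z (P (X p m)) * (b2z (Q (Y p m.+1)) - b2z (Q (Y p m))).
Definition W p (A B : int) := \sum_(0 <= i < size p) gterm p (fun x => A < x) (fun y => B < y) i.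

Lemma shift_sum (f : nat -> int) n k : (forall i, f (i + n)%N = f i) ->
  \sum_(0 <= j < n) f (k + j)%N = \sum_(0 <= j < n) f j.
Proof.
move=> Hf; elim: k => [|k IH]; first by apply: eq_bigr => i _; rewrite add0n.
rewrite -IH.
case: n Hf {IH} => [|n] Hf; first by rewrite !big_geq.
rewrite [LHS]big_nat_recr // [RHS]big_nat_recl //.
rewrite (@eq_bigr _ _ _ _ _ _ (fun j => f (k.+1 + j)%N) (fun j => f (k + j.+1)%N)); last first.
  by move=> i _; rewrite addSnnS.
rewrite addn0 addSnnS -(Hf k) /=; apply: addrC.
Qed.

Lemma gstep p P Q m : (0 < size p)%N -> Defs.closed p ->
  gterm p P Q m = gterm p P Q m.+1 * 0 + b2z (P (X p m.+1)) * (b2z (Q (Y p m.+1)) - b2z (Q (Y p m))).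
Proof.
move=> Hn Hc; rewrite mulr0 add0r /gterm.
rewrite !X_S // !Y_S //; case: (st p m) => /=; rewrite ?addr0 ?subrr ?mulr0 //.
Qed.

Lemma gterm0 p P Q m : (0 < size p)%N -> Defs.closed p -> P (X p m.+1) = false ->
  gterm p P Q m = 0.
Proof. by move=> Hn Hc HP; rewrite (gstep p P Q m Hn Hc) HP mulr0 /b2z mul0r add0r. Qed.

Lemma vertex_rel p k : self_avoiding_closed p -> directed p -> p <> [::] -> (k < size p)%N ->
  rotp p = W p (X p k) (Y p k - 1) + W p (X p k - 1) (Y p k)
           + Tc (st p (k + (size p).-1)) (st p k) + Tpc (st p (k + (size p).-1)) (st p k).
Proof.
move=> Hsa Hd Hne Hk.
have Hc := proj1 Hsa.
have Hn3 := size3 p Hd Hc Hne.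
set n := size p.
have Hn : (0 < n)%N by lia.
set xk := fun i => X p (k + i).
set yk := fun i => Y p (k + i).
have Hxk : forall i, xk i.+1 = xk i + dx (st p (k + i)) by move=> i; rewrite /xk addnS X_S.
have Hyk : forall i, yk i.+1 = yk i + dy (st p (k + i)) by move=> i; rewrite /yk addnS Y_S.
have Hu : forall i, unitv (xk i.+1 - xk i) (yk i.+1 - yk i).
  have e : forall a b : int, a + b - a = b by move=> *; ring.
  by move=> i; rewrite Hxk Hyk !e; apply: unit_step.
have Hnz : forall i j, (i < j)%N -> (j <= n)%N -> ~ (i = 0%N /\ j = n) ->
    ~ (xk j - xk i = 0 /\ yk j - yk i = 0).
  move=> i j Hij Hjn Hc0 [E1 E2].
  have := inj_XY p _ _ Hsa Hn (_ : X p (k + i) = X p (k + j)) (_ : Y p (k + i) = Y p (k + j)).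
  move=> /(_ ltac:(rewrite /xk in E1; lia)) /(_ ltac:(rewrite /yk in E2; lia)).
  move/eqP; rewrite eqn_modDl.
  have [Hjn'|Ej] : (j < n)%N \/ j = n by lia.
    by rewrite !modn_small //; [move/eqP => ?; lia|lia].
  subst j; rewrite modnn modn_small //; move/eqP => ?; lia.
have H := hopf xk yk n Hu Hnz Hn3.
have Hn1 : n = (n.-1).+1 by lia.
have ET : forall i, Tri xk yk i = Tc (st p (k + i)) (st p (k + i).+1).
  move=> i; rewrite /Tri /Eh /Ev /Tc !Hxk !Hyk !addnS.
  congr (cc _ _ _ _ + cc _ _ _ _); ring.
rewrite (eq_bigr _ (fun i _ => ET i)) in H.
have Erot : rotp p = \sum_(0 <= i < n.-1) Tc (st p (k + i)) (st p (k + i).+1)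
                     + Tc (st p (k + n.-1)) (st p k).
  rewrite /rotp -/n -(shift_sum (fun i => Tc (st p i) (st p i.+1)) n k); last first.
    by move=> i; rewrite /= st_per -addSn st_per.
  rewrite {1}Hn1 big_nat_recr //= -addnS -Hn1 /n addnC st_per //.
have ES0 : \sum_(1 <= j < n.-1) Eh xk yk 0 j = W p (X p k) (Y p k - 1).
  rewrite (@eq_big_nat _ _ _ 1 n.-1 _ (fun j => gterm p (fun x => X p k < x) (fun y => Y p k - 1 < y) (k + j))); last first.
    move=> j _; rewrite /Eh /gterm /xk /yk addn0 addnS; bzsolve.
  rewrite /W -/n -(shift_sum (fun j => gterm p (fun x => X p k < x) (fun y => Y p k - 1 < y) j) n k); last first.
    by move=> i; rewrite /gterm /= X_per -addSn Y_per Y_per.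
  rewrite (big_ltn (m := 0%N)) // {2}Hn1 big_nat_recr /=; last by lia.
  rewrite (gterm0 p _ _ (k + n.-1) Hn Hc); last by rewrite -addnS -Hn1 /n X_per ltxx.
  rewrite /gterm addn0 ltxx /b2z mul0r; ring.
have ESE : \sum_(1 <= i < n.-1) Ev xk yk i n = W p (X p k - 1) (Y p k).
  have Exn : xk n = X p k by rewrite /xk /n X_per.
  have Eyn : yk n = Y p k by rewrite /yk /n Y_per.
  rewrite (@eq_big_nat _ _ _ 1 n.-1 _ (fun j => gterm p (fun x => x < X p k) (fun y => y <= Y p k) (k + j))); last first.
    move=> j _; rewrite /Ev Exn Eyn /gterm /xk /yk addnS; bzsolve.
  transitivity (\sum_(0 <= j < n) gterm p (fun x => x < X p k) (fun y => y <= Y p k) j).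
    rewrite -(shift_sum (fun j => gterm p (fun x => x < X p k) (fun y => y <= Y p k) j) n k); last first.
      by move=> i; rewrite /gterm /= X_per -addSn Y_per Y_per.
    rewrite (big_ltn (m := 0%N)) // {2}Hn1 big_nat_recr /=; last by lia.
    rewrite (gterm0 p _ _ (k + n.-1) Hn Hc); last by rewrite -addnS -Hn1 /n X_per ltxx.
    rewrite {2}/gterm addn0 ltxx /b2z mul0r add0r addr0 //.
  rewrite (eq_bigr (fun j => gterm p (fun x => X p k - 1 < x) (fun y => Y p k < y) j
                     - (b2z (Y p k < Y p j.+1) - b2z (Y p k < Y p j)))); last first.
    by move=> j _; rewrite /gterm; bzsolve.
  rewrite sumrB telescope_sumr // /W -/n.
  have -> : Y p n = Y p 0 by rewrite -(add0n n) Y_per.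
  rewrite subrr subr0 //.
have Ecorner : Ev xk yk 0 n.-1 + Eh xk yk 1 n.-1 = Tpc (st p (k + n.-1)) (st p k).
  have Exn : xk n.-1.+1 = X p k by rewrite -Hn1 /xk /n X_per.
  have Eyn : yk n.-1.+1 = Y p k by rewrite -Hn1 /yk /n Y_per.
  have Ex : xk n.-1 = X p k - dx (st p (k + n.-1)) by rewrite -Exn Hxk; ring.
  have Ey : yk n.-1 = Y p k - dy (st p (k + n.-1)) by rewrite -Eyn Hyk; ring.
  have Ex1 : xk 1 = X p k + dx (st p k) by rewrite Hxk /xk addn0.
  have Ey1 : yk 1 = Y p k + dy (st p k) by rewrite Hyk /yk addn0.
  have Ex0 : xk 0 = X p k by rewrite /xk addn0.
  have Ey0 : yk 0 = Y p k by rewrite /yk addn0.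
  rewrite /Ev /Eh Exn Eyn Ex Ey Ex1 Ey1 Ex0 Ey0 /Tpc.
  congr (cc _ _ _ _ + cc _ _ _ _); ring.
rewrite Erot H ES0 ESE Ecorner.
set A := W _ _ _. set B := W _ _ _. ring.
Qed.


Definition eqv p i k := (X p i == X p k) && (Y p i == Y p k).

Lemma sum_delta n k (F : nat -> int) : (k < n)%N ->
  \sum_(0 <= i < n) b2z (i == k) * F i = F k.
Proof.
elim: n => [//|n IH] Hk.
rewrite big_nat_recr //=.
have [Hkn|->] : (k < n)%N \/ k = n by lia.
  by rewrite IH // (_ : (n == k) = false) /b2z ?mul0r ?addr0 //; apply/eqP; lia.
rewrite eqxx /b2z mul1r big1_seq ?add0r // => i; rewrite mem_index_iota => Hi.
by rewrite (_ : (i == n) = false) ?mul0r //; apply/eqP; lia.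
Qed.

Lemma eqv_mod p i j : self_avoiding_closed p -> (0 < size p)%N ->
  eqv p i j = (i %% size p == j %% size p)%N.
Proof.
move=> Hsa Hn; apply/idP/idP.
  by move/andP => [/eqP Hx /eqP Hy]; apply/eqP; apply: inj_XY Hsa Hn Hx Hy.
by move/eqP => E; rewrite /eqv /X /Y E !eqxx.
Qed.

Lemma localize p k (f g : step -> int) :
  self_avoiding_closed p -> (0 < size p)%N -> (k < size p)%N ->
  \sum_(0 <= i < size p) (b2z (eqv p i k) * f (st p i) + b2z (eqv p i.+1 k) * g (st p i))
  = f (st p k) + g (st p (k + (size p).-1)).
Proof.
move=> Hsa Hn Hk; rewrite big_split /=.
set n := size p.
have Hk' : ((k + n.-1) %% n < n)%N by rewrite ltn_pmod.
rewrite (@eq_big_nat _ _ _ 0 n _ (fun i => b2z (i == k) * f (st p i))); last first.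
  by move=> i /andP [_ Hi]; rewrite eqv_mod // !modn_small.
rewrite (@eq_big_nat _ _ _ 0 n (fun i => b2z (eqv p i.+1 k) * g (st p i))
          (fun i => b2z (i == ((k + n.-1) %% n)%N) * g (st p i))); last first.
  move=> i /andP [_ Hi]; rewrite eqv_mod // (modn_small Hk) modS_split //.
  have -> : ((k + n.-1) %% n = if k == 0%N then n.-1 else k.-1)%N.
    case: k Hk {Hk'} => [|k] Hk; first by rewrite add0n modn_small //; lia.
    have -> : (k.+1 + n.-1 = k + n)%N by lia.
    by rewrite modnDr modn_small //; lia.
  rewrite modn_small //.
  by case: ifP => H1; case: ifP => H2; congr (b2z _ * _); apply/eqP/eqP; lia.
rewrite !sum_delta //.
by rewrite /st modn_mod.
Qed.

Lemma E1 p k : self_avoiding_closed p -> (0 < size p)%N -> (k < size p)%N ->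
  W p (X p k - 1) (Y p k) - W p (X p k) (Y p k) =
  b2z (st p k == U) - b2z (st p (k + (size p).-1) == D).
Proof.
move=> Hsa Hn Hk; have Hc := proj1 Hsa.
rewrite /W -sumrB.
rewrite (@eq_big_nat _ _ _ 0 (size p) _ (fun i => b2z (eqv p i k) * (fun s => b2z (s == U)) (st p i)
   + b2z (eqv p i.+1 k) * (fun s => - b2z (s == D)) (st p i))); last first.
  move=> i _; rewrite /gterm /eqv !X_S // !Y_S //; case: (st p i) => /=; bzsolve.
by rewrite (localize p k (fun s => b2z (s == U)) (fun s => - b2z (s == D))).
Qed.

Lemma E2 p k : self_avoiding_closed p -> (0 < size p)%N -> (k < size p)%N ->
  W p (X p k - 1) (Y p k - 1) - W p (X p k) (Y p k - 1) =
  b2z (st p (k + (size p).-1) == U) - b2z (st p k == D).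
Proof.
move=> Hsa Hn Hk; have Hc := proj1 Hsa.
rewrite /W -sumrB.
rewrite (@eq_big_nat _ _ _ 0 (size p) _ (fun i => b2z (eqv p i k) * (fun s => - b2z (s == D)) (st p i)
   + b2z (eqv p i.+1 k) * (fun s => b2z (s == U)) (st p i))); last first.
  move=> i _; rewrite /gterm /eqv !X_S // !Y_S //; case: (st p i) => /=; bzsolve.
by rewrite (localize p k (fun s => - b2z (s == D)) (fun s => b2z (s == U))) //= addrC.
Qed.

Lemma E3 p k : self_avoiding_closed p -> (0 < size p)%N -> (k < size p)%N ->
  W p (X p k) (Y p k) - W p (X p k) (Y p k - 1) =
  b2z (st p k == R) - b2z (st p (k + (size p).-1) == L).
Proof.
move=> Hsa Hn Hk; have Hc := proj1 Hsa.
set phi := fun i => b2z (X p k < X p i) * b2z (Y p i == Y p k).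
rewrite /W -sumrB.
rewrite (@eq_big_nat _ _ _ 0 (size p) _ (fun i => (b2z (eqv p i k) * (fun s => b2z (s == R)) (st p i)
   + b2z (eqv p i.+1 k) * (fun s => - b2z (s == L)) (st p i)) - (phi i.+1 - phi i))); last first.
  move=> i _; rewrite /gterm /eqv /phi !X_S // !Y_S //; case: (st p i) => /=; rewrite ?addr0; bz2.
rewrite sumrB (localize p k (fun s => b2z (s == R)) (fun s => - b2z (s == L))) // telescope_sumr //.
have -> : phi (size p) = phi 0%N by rewrite /phi -(add0n (size p)) X_per Y_per.
by rewrite subrr subr0 /=.
Qed.


Definition tau (s t : step) : int :=
  match s, t with U, L => 1 | D, R => 1 | R, D => -1 | L, U => -1 | _, _ => 0 end.
Lemma tauE s t : Tc s t + Tpc s t = tau s t.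
Proof. by case: s; case: t; vm_compute. Qed.

Lemma local_a (sp sn : step) (TL TR BL BR rot : int) :
  sn != Defs.opp sp ->
  TL - TR = b2z (sn == U) - b2z (sp == D) ->
  BL - BR = b2z (sp == U) - b2z (sn == D) ->
  TR - BR = b2z (sn == R) - b2z (sp == L) ->
  rot = BR + TL + tau sp sn ->
  rot = 1 \/ rot = -1 ->
  (TL = 0 \/ TL = rot) /\ (TR = 0 \/ TR = rot) /\ (BL = 0 \/ BL = rot) /\ (BR = 0 \/ BR = rot).
Proof.
by case: sp; case: sn => //= _; rewrite /b2z /=; lia.
Qed.

Lemma local_b (sp sn : step) (TL TR BL BR rot : int) :
  sn != Defs.opp sp ->
  TL - TR = b2z (sn == U) - b2z (sp == D) ->
  BL - BR = b2z (sp == U) - b2z (sn == D) ->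
  TR - BR = b2z (sn == R) - b2z (sp == L) ->
  rot = BR + TL + tau sp sn ->
  TL = 0 -> BL = 0 -> (sp == D) || (sp == L) -> (sn == U) || (sn == R) ->
  (rot = 1 \/ rot = -1) /\ TR = rot.
Proof.
by case: sp; case: sn => //= _; rewrite /b2z /=; lia.
Qed.

Lemma vertex_W p k : self_avoiding_closed p -> directed p -> p <> [::] -> (k < size p)%N ->
  rotp p = 1 \/ rotp p = -1 ->
  let r := rotp p in
  (W p (X p k - 1) (Y p k) = 0 \/ W p (X p k - 1) (Y p k) = r) /\
  (W p (X p k) (Y p k) = 0 \/ W p (X p k) (Y p k) = r) /\
  (W p (X p k - 1) (Y p k - 1) = 0 \/ W p (X p k - 1) (Y p k - 1) = r) /\
  (W p (X p k) (Y p k - 1) = 0 \/ W p (X p k) (Y p k - 1) = r).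
Proof.
move=> Hsa Hd Hne Hk Hr r.
have Hc := proj1 Hsa.
have Hn3 := size3 p Hd Hc Hne.
have Hn : (0 < size p)%N by lia.
apply: (local_a (st p (k + (size p).-1)) (st p k)) => //.
- have := nonopp p (k + (size p).-1) Hsa Hd Hne.
  by rewrite -addnS prednK // st_per.
- exact: E1.
- exact: E2.
- exact: E3.
- by rewrite /r (vertex_rel p k) // -tauE; ring.
Qed.

Lemma W_left p A B : (0 < size p)%N -> (forall i, A < X p i) -> W p A B = 0.
Proof.
move=> Hn HA; rewrite /W.
rewrite (eq_bigr (fun i => b2z (B < Y p i.+1) - b2z (B < Y p i))); last first.
  by move=> i _; rewrite /gterm HA /b2z mul1r.
rewrite telescope_sumr //.
by rewrite -{1}(add0n (size p)) Y_per subrr.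
Qed.

Lemma W_right p A B : (forall i, X p i <= A) -> W p A B = 0.
Proof.
move=> HA; rewrite /W big1 // => i _.
rewrite /gterm /b2z; case: ifP => H; last by rewrite mul0r.
by have := HA i; lia.
Qed.

Lemma ex_min (P : pred nat) (f : nat -> int) n : (exists i, (i < n)%N /\ P i) ->
  exists k, [/\ (k < n)%N, P k & forall i, (i < n)%N -> P i -> f k <= f i].
Proof.
elim: n => [[i [//]]|n IH] [i [Hi HP]].
case Hex: [exists j : 'I_n, P j].
  move/existsP: Hex => [j Hj].
  have [k [Hk HPk Hmin]] := IH (ex_intro _ (nat_of_ord j) (conj (ltn_ord j) Hj)).
  case: (lerP (f k) (f n)) => Hkn.
    exists k; split => //; first lia.
    move=> i' Hi' HPi'; have [Hlt|->] : (i' < n)%N \/ i' = n by lia.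
      exact: Hmin.
    exact: Hkn.
  case HPn: (P n).
    exists n; split => //.
    move=> i' Hi' HPi'; have [Hlt|->] : (i' < n)%N \/ i' = n by lia.
      by have := Hmin i' Hlt HPi'; lia.
    by [].
  exists k; split => //; first lia.
  move=> i' Hi' HPi'; have [Hlt|Heq] : (i' < n)%N \/ i' = n by lia.
    exact: Hmin.
  by rewrite Heq HPn in HPi'.
exists n; split => //.
  have [Hlt|Heq] : (i < n)%N \/ i = n by lia.
    by move/negbT/existsPn: Hex => /(_ (Ordinal Hlt)); rewrite HP.
  by rewrite -Heq.
move=> i' Hi' HPi'; have [Hlt|->] : (i' < n)%N \/ i' = n by lia.
  by move/negbT/existsPn: Hex => /(_ (Ordinal Hlt)); rewrite HPi'.
by [].
Qed.

Lemma X_mod p i : X p (i %% size p) = X p i. Proof. by rewrite /X modn_mod. Qed.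
Lemma Y_mod p i : Y p (i %% size p) = Y p i. Proof. by rewrite /Y modn_mod. Qed.

Lemma extremal p : self_avoiding_closed p -> directed p -> p <> [::] ->
  (rotp p = 1 \/ rotp p = -1) /\ exists k, (k < size p)%N /\ W p (X p k) (Y p k) = rotp p.
Proof.
move=> Hsa Hd Hne.
have Hc := proj1 Hsa.
have Hn3 := size3 p Hd Hc Hne.
have Hn : (0 < size p)%N by lia.
have [k1 [Hk1 _ Hm1]] := ex_min predT (X p) (size p) (ex_intro _ 0%N (conj Hn isT)).
have [k [Hk /eqP Hxk Hm]] := ex_min (fun i => X p i == X p k1) (Y p) (size p)
        (ex_intro _ k1 (conj Hk1 (eqxx _))).
have HX : forall i, X p k <= X p i.
  by move=> i; rewrite -(X_mod p i) Hxk; apply: Hm1 => //; rewrite ltn_pmod.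
have HY : forall i, X p i = X p k -> Y p k <= Y p i.
  move=> i Hi; rewrite -(Y_mod p i); apply: Hm; first by rewrite ltn_pmod.
  by rewrite X_mod Hi Hxk.
have Hsp : (st p (k + (size p).-1) == D) || (st p (k + (size p).-1) == L).
  have Ex := X_S p (k + (size p).-1) Hn Hc; have Ey := Y_S p (k + (size p).-1) Hn Hc.
  rewrite -addnS prednK // X_per in Ex; rewrite -addnS prednK // Y_per in Ey.
  have := HX (k + (size p).-1)%N; have := HY (k + (size p).-1)%N.
  case: (st p (k + (size p).-1)) Ex Ey => //= Ex Ey; lia.
have Hsn : (st p k == U) || (st p k == R).
  have Ex := X_S p k Hn Hc; have Ey := Y_S p k Hn Hc.
  have := HX k.+1; have := HY k.+1.
  case: (st p k) Ex Ey => //= Ex Ey; lia.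
have [Hr Hw] := local_b (st p (k + (size p).-1)) (st p k) (W p (X p k - 1) (Y p k)) (W p (X p k) (Y p k))
   (W p (X p k - 1) (Y p k - 1)) (W p (X p k) (Y p k - 1)) (rotp p)
   ltac:(have := nonopp p (k + (size p).-1) Hsa Hd Hne; by rewrite -addnS prednK // st_per)
   (E1 p k Hsa Hn Hk) (E2 p k Hsa Hn Hk) (E3 p k Hsa Hn Hk)
   ltac:(by rewrite (vertex_rel p k) // -tauE; ring)
   (W_left p (X p k - 1) (Y p k) Hn ltac:(move=> i; have := HX i; lia))
   (W_left p (X p k - 1) (Y p k - 1) Hn ltac:(move=> i; have := HX i; lia)) Hsp Hsn.
by split => //; exists k.
Qed.


Lemma bound_sum (F : nat -> int) n j : (j < n)%N -> F j <= \sum_(0 <= i < n) `|F i|.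
Proof.
move=> Hj; rewrite -(sum_delta n j F) //; apply: ler_sum => i _.
rewrite /b2z; case: (i == j); last by rewrite mul0r normr_ge0.
by rewrite mul1r ler_norm.
Qed.

Definition cornerb p A B i :=
  ((X p i == A) || (X p i == A + 1)) && ((Y p i == B) || (Y p i == B + 1)).

Lemma glob p : self_avoiding_closed p -> directed p -> p <> [::] ->
  rotp p = 1 \/ rotp p = -1 ->
  forall A B, W p A B = 0 \/ W p A B = rotp p.
Proof.
move=> Hsa Hd Hne Hr.
have Hc := proj1 Hsa.
have Hn3 := size3 p Hd Hc Hne.
have Hn : (0 < size p)%N by lia.
set M := \sum_(0 <= i < size p) `|X p i|.
have HM : forall i, X p i <= M.
  by move=> i; rewrite -X_mod; apply: bound_sum; rewrite ltn_pmod.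
suff H : forall d : nat, forall A B, M <= A + d%:Z -> W p A B = 0 \/ W p A B = rotp p.
  move=> A B; apply: (H (absz (M - A))); lia.
elim=> [|d IH] A B HA.
  by left; apply: W_right => i; have := HM i; lia.
case Hh: (has (cornerb p A B) (iota 0 (size p))).
{ move/hasP: Hh => [i Hmem Hcor].
  move: Hmem; rewrite mem_iota add0n => /andP [_ Hi].
  have [H1 [H2 [H3 H4]]] := vertex_W p i Hsa Hd Hne Hi Hr.
  move: Hcor; rewrite /cornerb => /andP [/orP [/eqP Hx|/eqP Hx] /orP [/eqP Hy|/eqP Hy]].
  all: have EA : A = X p i \/ A = X p i - 1 by lia.
  all: have EB : B = Y p i \/ B = Y p i - 1 by lia.
  all: by case: EA => EA; case: EB => EB; rewrite EA EB. }
have -> : W p A B = W p (A + 1) B.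
  apply/eqP; rewrite -subr_eq0; apply/eqP.
  rewrite /W -sumrB big1_seq // => i; rewrite mem_index_iota => /andP [_ Hi].
  move/hasPn: Hh => /(_ i); rewrite mem_iota add0n Hi => /(_ isT).
  rewrite /cornerb /gterm Y_S //; case: (st p i) => /= Hcor; rewrite ?addr0; bz2.
apply: IH; lia.
Qed.


Lemma cnt (N : nat) (X0 z : int) : X0 <= z -> z <= X0 + N%:Z ->
  \sum_(0 <= a < N) b2z (X0 + a%:Z < z) = z - X0.
Proof.
elim: N z => [|N IH] z H1 H2.
  by rewrite big_geq //; lia.
rewrite big_nat_recr //=.
have [Hz|Hz] : z <= X0 + N%:Z \/ z = X0 + N.+1%:Z by lia.
  by rewrite IH // /b2z; case: ifP => ?; lia.
rewrite (@eq_big_nat _ _ _ 0 N _ (fun _ => 1)); last first.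
  by move=> a /andP [_ Ha]; rewrite /b2z; case: ifP => ?; lia.
rewrite sumr_const_nat /b2z; case: ifP => ?; lia.
Qed.

Lemma area_XY p : (0 < size p)%N -> Defs.closed p ->
  area2 p = \sum_(0 <= i < size p) (X p i * Y p i.+1 - X p i.+1 * Y p i).
Proof.
move=> Hn Hc; rewrite /area2 -(big_mkord xpredT (fun i => posx p i * posy p i.+1 - posx p i.+1 * posy p i)).
apply: eq_big_nat => i /andP [_ Hi].
have E : forall j, (j <= size p)%N -> posx p j = X p j /\ posy p j = Y p j.
  move=> j Hj; have [Hlt|->] : (j < size p)%N \/ j = size p by lia.
    by rewrite /X /Y modn_small.
  move/andP: Hc => [/eqP -> /eqP ->].
  by rewrite /X /Y modnn posx0 posy0.
have [E1 E2] := E i (ltnW Hi); have [E3 E4] := E i.+1 Hi.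
by rewrite E1 E2 E3 E4.
Qed.

Lemma area_sum p : (0 < size p)%N -> Defs.closed p ->
  area2 p = 2 * \sum_(0 <= i < size p) X p i * (Y p i.+1 - Y p i).
Proof.
move=> Hn Hc; rewrite area_XY //.
rewrite (eq_bigr (fun i => 2 * (X p i * (Y p i.+1 - Y p i))
           - (X p i.+1 * Y p i.+1 - X p i * Y p i))); last first.
  move=> i _.
  have H0 : (X p i.+1 - X p i) * (Y p i.+1 - Y p i) = 0.
    by rewrite X_S // Y_S //; case: (st p i) => /=; ring.
  rewrite -[LHS]subr0 -H0; ring.
have EX : X p (size p) = X p 0 by rewrite -(X_per p 0) add0n.
have EY : Y p (size p) = Y p 0 by rewrite -(Y_per p 0) add0n.
rewrite sumrB telescope_sumr // EX EY subrr subr0.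
by rewrite mulr_sumr.
Qed.

Lemma ex3 (N n : nat) (F : nat -> nat -> nat -> int) :
  \sum_(0 <= a < N) \sum_(0 <= b < N) \sum_(0 <= i < n) F a b i =
  \sum_(0 <= i < n) \sum_(0 <= a < N) \sum_(0 <= b < N) F a b i.
Proof.
rewrite (eq_bigr (fun a => \sum_(0 <= i < n) \sum_(0 <= b < N) F a b i)).
  by rewrite exchange_big.
by move=> a _; rewrite exchange_big.
Qed.

Lemma area_box p (X0 Y0 : int) (N : nat) : (0 < size p)%N -> Defs.closed p ->
  (forall i, X0 <= X p i /\ X p i <= X0 + N%:Z) ->
  (forall i, Y0 <= Y p i /\ Y p i <= Y0 + N%:Z) ->
  area2 p = 2 * \sum_(0 <= a < N) \sum_(0 <= b < N) W p (X0 + a%:Z) (Y0 + b%:Z).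
Proof.
move=> Hn Hc HX HY; rewrite area_sum //; congr (2 * _).
rewrite /W /gterm.
rewrite (ex3 N (size p) (fun a b i => b2z (X0 + a%:Z < X p i) * (b2z (Y0 + b%:Z < Y p i.+1) - b2z (Y0 + b%:Z < Y p i)))).
symmetry.
rewrite (eq_bigr (fun i => X p i * (Y p i.+1 - Y p i) - X0 * (Y p i.+1 - Y p i))); last first.
  move=> i _.
  rewrite (eq_bigr (fun a => b2z (X0 + a%:Z < X p i) * \sum_(0 <= b < N) (b2z (Y0 + b%:Z < Y p i.+1) - b2z (Y0 + b%:Z < Y p i)))); last first.
    by move=> a _; rewrite mulr_sumr.
  rewrite -mulr_suml sumrB !cnt; try ring; try (case: (HX i); lia); try (case: (HY i); lia); try (case: (HY i.+1); lia).
rewrite sumrB -mulr_sumr telescope_sumr //.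
by rewrite -(add0n (size p)) Y_per subrr mulr0 subr0.
Qed.

Lemma sum_ge (F : nat -> int) N a0 : (forall a, 0 <= F a) -> (a0 < N)%N ->
  F a0 <= \sum_(0 <= a < N) F a.
Proof.
move=> H0 Ha; rewrite -(sum_delta N a0 F) //; apply: ler_sum => a _.
by rewrite /b2z; case: (a == a0); rewrite ?mul1r ?mul0r.
Qed.

Lemma abs_bound (F : nat -> int) n j : (j < n)%N -> `|F j| <= \sum_(0 <= i < n) `|F i|.
Proof.
move=> Hj; apply: (sum_ge (fun i => `|F i|)) => //.
Qed.

Lemma rot_area p : self_avoiding_closed p -> directed p -> p <> [::] ->
  (rotp p = 1 \/ rotp p = -1) /\ 0 < rotp p * area2 p.
Proof.
move=> Hsa Hd Hne.
have Hc := proj1 Hsa.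
have Hn3 := size3 p Hd Hc Hne.
have Hn : (0 < size p)%N by lia.
have [Hr [k [Hk Hwk]]] := extremal p Hsa Hd Hne.
split => //.
have Hg := glob p Hsa Hd Hne Hr.
set M := \sum_(0 <= i < size p) `|X p i| + \sum_(0 <= i < size p) `|Y p i|.
have HXb : forall i, `|X p i| <= M.
  move=> i; rewrite -(X_mod p i); have := abs_bound (X p) (size p) (i %% size p) (ltn_pmod i Hn).
  have := abs_bound (Y p) (size p) (i %% size p) (ltn_pmod i Hn).
  have : 0 <= `|Y p (i %% size p)| by [].
  rewrite /M; set S1 := \sum_(_ <= _ < _) _; set S2 := \sum_(_ <= _ < _) _.
  clearbody S1 S2; lia.
have HYb : forall i, `|Y p i| <= M.
  move=> i; rewrite -(Y_mod p i); have := abs_bound (X p) (size p) (i %% size p) (ltn_pmod i Hn).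
  have := abs_bound (Y p) (size p) (i %% size p) (ltn_pmod i Hn).
  have : 0 <= `|X p (i %% size p)| by [].
  rewrite /M; set S1 := \sum_(_ <= _ < _) _; set S2 := \sum_(_ <= _ < _) _.
  clearbody S1 S2; lia.
have HM0 : 0 <= M by have := HXb 0%N; have : 0 <= `|X p 0| by []; lia.
set N := (absz (2 * M)%R + 1)%N.
have HN : (N%:Z = 2 * M + 1) by rewrite /N; lia.
rewrite (area_box p (- M) (- M) N) //; last first.
  by move=> i; have := HYb i; lia.
  by move=> i; have := HXb i; lia.
rewrite mulrCA mulr_sumr.
have Hpos : forall a b, 0 <= rotp p * W p (- M + a%:Z) (- M + b%:Z).
  move=> a b; case: (Hg (- M + a%:Z) (- M + b%:Z)) => ->; case: Hr => ->; lia.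
have Ha0 : (absz (X p k + M)%R < N)%N by have := HXb k; lia.
have Hb0 : (absz (Y p k + M)%R < N)%N by have := HYb k; lia.
have := sum_ge (fun a => rotp p * \sum_(0 <= b < N) W p (- M + a%:Z) (- M + b%:Z)) N _ _ Ha0.
  move=> /(_ ltac:(move=> a; rewrite mulr_sumr; apply: sumr_ge0 => b _; apply: Hpos)).
have := sum_ge (fun b => rotp p * W p (- M + (absz (X p k + M))%:Z) (- M + b%:Z)) N _ (Hpos _) Hb0.
have -> : - M + (absz (X p k + M))%:Z = X p k by have := HXb k; lia.
have -> : - M + (absz (Y p k + M))%:Z = Y p k by have := HYb k; lia.
rewrite Hwk /= -mulr_sumr.
set S1 := \sum_(_ <= _ < _) _. set S2 := \sum_(_ <= _ < _) _.
move=> H1 H2.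
have : rotp p * rotp p = 1 by case: Hr => ->.
nia.
Qed.


Lemma count_sum (T : Type) (P : pred T) (z : seq T) :
  (count P z)%:Z = \sum_(x <- z) b2z (P x).
Proof.
elim: z => [|x z IH]; first by rewrite big_nil.
by rewrite /= big_cons -IH /b2z; case: (P x) => /=; lia.
Qed.

Lemma nth_rot1 p i : (i < size p)%N -> nth U (rot 1 p) i = st p i.+1.
Proof.
case: p => [//|a q] Hi; rewrite rot1_cons nth_rcons /st /=.
case: ifP => H1.
  by rewrite modn_small.
have -> : i = size q by move: Hi => /=; lia.
by rewrite eqxx modnn.
Qed.

Lemma cturns_sum p s t : (cturns p s t)%:Z =
  \sum_(0 <= i < size p) b2z ((st p i == s) && (st p i.+1 == t)).
Proof.
rewrite /cturns count_sum (big_nth (U, U)) size_zip size_rot minnn.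
apply: eq_big_nat => i /andP [_ Hi].
by rewrite nth_zip ?size_rot //= nth_rot1 // /st (modn_small Hi).
Qed.

Definition Ecx (s x y : step) : int :=
  b2z ((x == s) && (y == cw_next s)) - b2z ((x == cw_next s) && (y == s)).
Definition phi (z : step) : int := b2z (z == R) - 2 * b2z (z == D) - b2z (z == L).

Lemma pair4 x y : y != Defs.opp x ->
  Ecx U x y + Ecx R x y + Ecx D x y + Ecx L x y = - 4 * Tc x y + phi y - phi x.
Proof. by case: x; case: y => // _; vm_compute. Qed.

Lemma cxdiff_sum p s : cxdiff p s =
  \sum_(0 <= i < size p) Ecx s (st p i) (st p i.+1).
Proof. by rewrite /cxdiff !cturns_sum -sumrB. Qed.

Lemma sum4 p : self_avoiding_closed p -> directed p -> p <> [::] ->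
  cxdiff p U + cxdiff p R + cxdiff p D + cxdiff p L = - 4 * rotp p.
Proof.
move=> Hsa Hd Hne.
rewrite !cxdiff_sum -!big_split /= /rotp mulr_sumr.
rewrite (eq_big_nat _ _ (fun i _ => pair4 _ _ (nonopp p i Hsa Hd Hne))).
rewrite (eq_bigr (fun i => - 4 * Tc (st p i) (st p i.+1) + (phi (st p i.+1) - phi (st p i)))); last first.
  by move=> i _; ring.
rewrite big_split /= telescope_sumr //.
have -> : phi (st p (size p)) = phi (st p 0) by rewrite -(st_per p 0) add0n.
by rewrite subrr addr0.
Qed.

Lemma part3 p : directed p -> p <> [::] -> self_avoiding_closed p ->
  (clockwise p -> cxdiff p U + cxdiff p R + cxdiff p D + cxdiff p L = 4) /\
  (counterclockwise p -> cxdiff p U + cxdiff p R + cxdiff p D + cxdiff p L = -4).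
Proof.
move=> Hd Hne Hsa.
have [Hr Hpos] := rot_area p Hsa Hd Hne.
rewrite sum4 //; split => H.
  by case: Hr Hpos => ->; rewrite /clockwise in H; lia.
by case: Hr Hpos => ->; rewrite /counterclockwise in H; lia.
Qed.


Lemma pair_cw s x y : y != Defs.opp x ->
  Ecx s x y - Ecx (cw_next s) x y = b2z (y == cw_next s) - b2z (x == cw_next s).
Proof. by case: s; case: x; case: y => // _; vm_compute. Qed.

Lemma xdiff_cons x y q s : xdiff [:: x, y & q] s = Ecx s x y + xdiff (y :: q) s.
Proof.
rewrite /xdiff /turns /= /Ecx /b2z.
case: ((x == s) && (y == cw_next s)); case: ((x == cw_next s) && (y == s)) => /=; lia.
Qed.

Lemma xdiff_step q x s : directed (x :: q) ->
  xdiff (x :: q) s - xdiff (x :: q) (cw_next s) =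
  b2z (last x q == cw_next s) - b2z (x == cw_next s).
Proof.
elim: q x => [|y q IH] x Hd.
  by rewrite /xdiff /turns /=; lia.
move: Hd; rewrite /directed /= => /andP [Hxy Hd].
rewrite !xdiff_cons.
have := IH y Hd; have := pair_cw s x y Hxy.
set A := xdiff _ _; set B := xdiff _ _; lia.
Qed.

Definition distf (a b : step) : nat :=
  if a == b then 0 else if cw_next a == b then 1 else if cw_next (cw_next a) == b then 2 else 3.
Definition Ifun a b s := b2z (has (fun j => iter j cw_next a == s) (iota 0 (distf a b))).

Lemma Iprop a b s : Ifun a b s - Ifun a b (cw_next s) = b2z (b == cw_next s) - b2z (a == cw_next s).
Proof. by case: a; case: b; case: s; vm_compute. Qed.

Lemma dist_unique a b m : (m <= 3)%N -> iter m cw_next a = b -> distf a b = m.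
Proof.
by case: m => [|[|[|[|m]]]] // _; case: a; case: b.
Qed.

Lemma part12 (p : seq step) (a b : step) :
  directed p -> p <> [::] -> head a p = a -> last b p = b ->
  (exists k : int,
     (forall s : step, (xdiff p s - k = 0) \/ (xdiff p s - k = 1)) /\
     (forall m : nat, (m <= 3)%N -> iter m cw_next a = b ->
        (forall m' : nat, (m' < m)%N -> iter m' cw_next a <> b) ->
        forall s : step,
          xdiff p s - k = 1 <->
          exists2 j : nat, (j < m)%N & iter j cw_next a = s)).
Proof.
case: p => [//|x q] Hd _ /= Ha Hb; subst x.
set Df := fun s => xdiff (a :: q) s - Ifun a b s.
have HD : forall s, Df s = Df (cw_next s).
  move=> s; have := xdiff_step q a s Hd; rewrite Hb.
  have := Iprop a b s; rewrite /Df; set A := xdiff _ _; set B := xdiff _ _; lia.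
have HDU : forall s, Df s = Df U.
  by case; rewrite ?(HD U) ?(HD R) ?(HD D) //.
exists (Df U).
have HE : forall s, xdiff (a :: q) s - Df U = Ifun a b s.
  move=> s; rewrite -(HDU s) /Df; ring.
split.
  by move=> s; rewrite HE /Ifun /b2z; case: has; [right|left].
move=> m Hm Hmb _ s; rewrite HE /Ifun (dist_unique a b m Hm Hmb).
split.
  rewrite /b2z; case: ifP => // /hasP [j]; rewrite mem_iota add0n => /andP [_ Hj] /eqP Hjs _.
  by exists j.
move=> [j Hj Hjs]; rewrite /b2z; case: ifP => // /negbT /hasPn /(_ j).
by rewrite mem_iota add0n Hj Hjs eqxx => /(_ isT).
Qed.


Theorem proposition2p2 (p : seq step) (a b : step) :
  directed p -> p <> [::] -> head a p = a -> last b p = b ->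
  (* (1) and (2) *)
  (exists k : int,
     (forall s : step, (xdiff p s - k = 0) \/ (xdiff p s - k = 1)) /\
     (forall m : nat, (m <= 3)%N -> iter m cw_next a = b ->
        (forall m' : nat, (m' < m)%N -> iter m' cw_next a <> b) ->
        forall s : step,
          xdiff p s - k = 1 <->
          exists2 j : nat, (j < m)%N & iter j cw_next a = s)) /\
  (* (3) *)
  (self_avoiding_closed p ->
     (clockwise p -> cxdiff p U + cxdiff p R + cxdiff p D + cxdiff p L = 4) /\
     (counterclockwise p -> cxdiff p U + cxdiff p R + cxdiff p D + cxdiff p L = -4)).
Proof.
move=> Hd Hne Ha Hb; split; first exact: part12.
move=> Hsa; exact: part3.
Qed.
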